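(* Let $N, T, L \ge 1$ be integers, let $P = \lfloor T/L \rfloor \ge 1$ and $\bar{P} = N P$. Let $f = (f_1,\dots,f_N)$ with each $f_n:\mathbb{Z}\to\mathbb{R}$ be an order-$(K, R_{\max})$ multivariate LRF, i.e. there exist $K \ge 1$, vectors $\theta_n \in \mathbb{R}^K$ ($n \in [N]$), and functions $h_1,\dots,h_K:\mathbb{Z}\to\mathbb{R}$ such that $f_n(t) = \sum_{k=1}^K (\theta_n)_k h_k(t)$ for all $n\in[N]$ and $t$, where each $h_k$ is an order-$R_k$ LRF with $R_k \le R_{\max}$. Let $\boldsymbol{M}^f \in \mathbb{R}^{L\times \bar{P}}$ be the stacked Page matrix of $f$, defined by $M^f_{i,\, j + P(n-1)} = f_n(i + (j-1)L)$ for $i\in[L]$, $j\in[P]$, $n\in[N]$. Then $\operatorname{rank}(\boldsymbol{M}^f) \le K \cdot R_{\max}$.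
   Context: $[m] := \{1,\dots,m\}$. A function $h:\mathbb{Z}\to\mathbb{R}$ is called an order-$R$ (univariate) linear recurrent formula (LRF) (relative to the horizon $T$) if there exist functions $g_r, \tilde h_r : \mathbb{Z}\to\mathbb{R}$, $r\in[R]$, such that $h(i+j) = \sum_{r=1}^R g_r(i)\,\tilde h_r(j)$ for all integers $i, j \ge 0$ with $i + j \le T$. *)

(* Defs.v *)
From HB Require Import structures.
From mathcomp Require Import all_boot all_order all_algebra.
Set Implicit Arguments. Unset Strict Implicit. Unset Printing Implicit Defensive.
Import Order.TTheory GRing.Theory Num.Theory.
Local Open Scope ring_scope.

Definition is_LRF (R : ringType) (T Rord : nat) (h : int -> R) : Prop :=
  exists (g ht : 'I_Rord -> int -> R),
    forall i j : nat, (i + j <= T)%N ->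
      h (i + j)%:Z = \sum_(r < Rord) g r i%:Z * ht r j%:Z.

(* Page matrix of g with L rows and P columns (0-based indices):
   entry (i, j) = g((i+1) + j L), i.e. the 1-based entry (i, j) is g(i + (j-1)L). *)
Definition page_mx (R : ringType) (L P : nat) (g : int -> R) : 'M[R]_(L, P) :=
  \matrix_(i < L, j < P) g (i.+1 + j * L)%N%:Z.

(* Stacked Page matrix: the column blocks page_mx (f n), n = 0..N-1, side by side,
   so that column j + P n (0-based) holds f_n at times (i+1) + j L. *)
Definition stacked_page_mx (R : ringType) (N L P : nat) (f : 'I_N -> int -> R)
  : 'M[R]_(L, \sum_(n < N) P) :=
  \mxrow_(n < N) page_mx L P (f n).

(* Main.v *)
Require Import Defs.
From HB Require Import structures.
From mathcomp Require Import all_boot all_order all_algebra.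
From mathcomp Require Import zify.
Import Order.TTheory GRing.Theory Num.Theory.
Local Open Scope ring_scope.

Lemma rank_sum_le (F : fieldType) (m n : nat) (I : Type) (r : seq I) (P : pred I)
  (M : I -> 'M[F]_(m, n)) :
  (\rank (\sum_(i <- r | P i) M i)%R <= \sum_(i <- r | P i) \rank (M i))%N.
Proof.
apply: (big_rec2 (fun A b => \rank A <= b)%N); first by rewrite mxrank0.
move=> i A b _ Hb.
have h1 := mxrankS (addmx_sub_adds (submx_refl (M i)) (submx_refl A)).
have h2 := (mxrank_adds_leqif (M i) A).1.
apply: (ssrnat.leq_trans h1); apply: (ssrnat.leq_trans h2).
by rewrite leq_add2l.
Qed.

Theorem proposition3p2 (R : realFieldType) (N T L : nat)
  (hN : (1 <= N)%N) (hT : (1 <= T)%N) (hL : (1 <= L)%N)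
  (hP : (1 <= T %/ L)%N)
  (K Rmax : nat) (hK : (1 <= K)%N)
  (theta : 'I_N -> 'rV[R]_K) (h : 'I_K -> int -> R) (Rk : 'I_K -> nat)
  (hRk : forall k, (Rk k <= Rmax)%N)
  (hLRF : forall k, is_LRF T (Rk k) (h k))
  (f : 'I_N -> int -> R)
  (hf : forall n t, f n t = \sum_(k < K) theta n 0 k * h k t) :
  (\rank (stacked_page_mx L (T %/ L) f) <= K * Rmax)%N.
Proof.
set P := (T %/ L)%N.
have -> : stacked_page_mx L P f =
  \sum_(k < K) \mxrow_(n < N) page_mx L P (fun t => theta n 0 k * h k t).
  rewrite /stacked_page_mx -mxrow_sum; apply: eq_mxrow => n.
  apply/matrixP => i j; rewrite summxE !mxE hf.
  by apply: eq_bigr => k _; rewrite mxE.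
apply: (leq_trans (rank_sum_le _ _ _ _ _ _ _)).
apply: (@leq_trans (\sum_(k < K) Rk k)%N).
  apply: leq_sum => k _.
  have [g [ht H]] := hLRF k.
  set A := \matrix_(i < L, r < Rk k) ht r (i.+1)%:Z.
  set B := \mxrow_(n < N) (\matrix_(r < Rk k, j < P) (theta n 0 k * g r (j * L)%N%:Z)).
  have -> : \mxrow_(n < N) page_mx L P (fun t => theta n 0 k * h k t) = A *m B.
    rewrite /B mul_mxrow; apply: eq_mxrow => n.
    apply/matrixP => i j; rewrite !mxE.
    have hle : (j * L + i.+1 <= T)%N.
      have h1 : (j.+1 * L <= P * L)%N by rewrite leq_mul2r ltn_ord orbT.
      have h2 := leq_trunc_div T L.
      have h3 := ltn_ord i.
      rewrite -/P in h2; rewrite mulSn in h1. lia.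
    rewrite addnC H // mulr_sumr; apply: eq_bigr => r _; rewrite !mxE.
    by rewrite mulrA [RHS]mulrC.
  exact: (leq_trans (mxrankM_maxl _ _) (rank_leq_col _)).
rewrite -[K in (_ <= K * _)%N]card_ord -sum_nat_const.
by apply: leq_sum => k _; apply: hRk.
Qed.
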